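(* Let $X \subset \mathbb{R}^{2n}$ be a symplectically self-polar convex body with $C^1$-smooth boundary, $T$ its symplectic outer billiard map, and $Y=\{x+f(x): x\in\partial X\}$. Then $Y\subset\mathbb{R}^{2n}\setminus X$ and $T(Y)=Y$; more precisely $T(x+f(x))=f(x)+f(f(x))$ for every $x\in\partial X$.
   Context: $\mathbb{R}^{2n}\cong\mathbb{C}^n$, $J$ is multiplication by $\sqrt{-1}$, $\omega(u,v)=\langle Ju,v\rangle$. For a convex body $X$ with origin in its interior, $X^\omega=\{y: \omega(x,y)\le 1\ \forall x\in X\}$; $X$ is symplectically self-polar if $X=X^\omega$. For $C^1$ boundary, $f\colon\partial X\to\partial X^\omega$ assigns to $x$ the unique $f(x)\in X^\omega$ with $\omega(x,f(x))=1$. Symplectic outer billiard map: for a strictly convex body $X$ with $C^1$ boundary and $z\notin X$, there is a unique $x\in\partial X$ such that the line through $z,x$ is the characteristic line $\ker(\omega|_{T_x\partial X})$ and $\omega(x,x-z)>0$; then $T(z)=2x-z$. *)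

(* Defs.v *)
From HB Require Import structures.
From mathcomp Require Import all_boot all_order all_algebra.
From mathcomp Require Import all_classical all_reals all_analysis.
Set Implicit Arguments. Unset Strict Implicit. Unset Printing Implicit Defensive.
Import Order.TTheory GRing.Theory Num.Theory.
Import numFieldNormedType.Exports.
Local Open Scope classical_set_scope.
Local Open Scope ring_scope.

(* Model of R^{2n} = C^n : row vectors of length n + n, a point (a, b)
   (a, b in R^n) standing for the complex vector a + sqrt(-1) b. *)
Section SymplecticOuterBilliards.
Variables (R : realType) (n : nat).
Local Notation V := 'rV[R]_(n + n).

(* J = multiplication by sqrt(-1): (a, b) |-> (-b, a). *)
Definition Jmul (u : V) : V := row_mx (- rsubmx u) (lsubmx u).

Definition inner (u v : V) : R := \sum_(i < n + n) u ord0 i * v ord0 i.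

Definition omega (u v : V) : R := inner (Jmul u) v.

Definition convex (X : set V) : Prop :=
  forall x y (t : R), X x -> X y -> 0 <= t -> t <= 1 ->
    X (t *: x + (1 - t) *: y).

Definition convex_body_0 (X : set V) : Prop :=
  convex X /\ compact X /\ (interior X) 0.

Definition boundary (X : set V) : set V := closure X `\` interior X.

Definition omega_polar (X : set V) : set V :=
  [set y | forall x, X x -> omega x y <= 1].

Definition symp_self_polar (X : set V) : Prop := X = omega_polar X.

Definition local_defining_fun (X : set V) (p : V) (U : set V)
    (rho : V -> R) (g : V -> V) : Prop :=
  [/\ open U /\ U p,
      (forall y, U y -> differentiable rho y /\
                       forall v, 'd rho y v = inner (g y) v),
      {within U, continuous g},
      (forall y, U y -> g y != 0) &
      X `&` U = [set y | U y /\ rho y <= 0]].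

Definition C1_boundary (X : set V) : Prop :=
  forall p, boundary X p -> exists U rho g, local_defining_fun X p U rho g.

Definition tangent_space (X : set V) (x : V) : set V :=
  [set v | exists U rho g, local_defining_fun X x U rho g /\ inner (g x) v = 0].

Definition char_dir (X : set V) (x : V) : set V :=
  [set u | tangent_space X x u /\
           forall v, tangent_space X x v -> omega u v = 0].

Definition fpol (X : set V) (x : V) : V :=
  xget 0 [set y | omega_polar X y /\ omega x y = 1].

(* x is the point of boundary X associated to z by the outer billiard:
   the line through z and x is the characteristic line at x, and
   omega(x, x - z) > 0. *)
Definition billiard_point (X : set V) (z x : V) : Prop :=
  [/\ boundary X x, z != x, char_dir X x (z - x) & 0 < omega x (x - z)].

Definition outer_billiard (X : set V) (z : V) : V :=
  let x := xget 0 (billiard_point X z) in 2%:R *: x - z.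

End SymplecticOuterBilliards.

(* Main.v *)
Require Import Defs.
From HB Require Import structures.
From mathcomp Require Import all_boot all_order all_algebra.
From mathcomp Require Import all_classical all_reals all_analysis.
From mathcomp Require Import ring lra.
Import Order.TTheory GRing.Theory Num.Theory.
Import numFieldNormedType.Exports.
Local Open Scope classical_set_scope.
Local Open Scope ring_scope.
Set Implicit Arguments. Unset Strict Implicit.

Section S.
Variables (R : realType) (n : nat).
Local Notation V := 'rV[R]_(n + n).

Lemma dirder (f : V -> R) p v :
  differentiable f p ->
  (fun t : R => t^-1 *: (f (t *: v + p) - f p)) @ 0^'+ --> 'd f p v.
Proof.
move=> df; rewrite -deriveE //.
have H : derivable f p v := diff_derivable df.
exact: (cvg_dnbhs_at_right H).
Qed.

Lemma shift_cvg (v p : V) : (fun t : R => t *: v + p) @ 0^'+ --> p.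
Proof.
apply: cvg_at_right_filter.
rewrite -[X in _ --> X]add0r; apply: cvgD; last exact: cvg_cst.
rewrite -(scale0r v); apply: cvgZl; exact: cvg_id.
Qed.

Lemma near_good (U : set V) p v : open U -> U p ->
  \forall t \near 0^'+, [/\ 0 < t, t <= 1 & U (t *: v + p)].
Proof.
move=> oU Up.
have nU : nbhs p U by apply: open_nbhs_nbhs; split.
have hU : \forall t \near (0:R)^'+, U (t *: v + p) by exact: (@shift_cvg v p).

have h1 := nbhs_right_gt (0:R).
have h2 : \forall t \near (0:R)^'+, t <= 1.
  apply: cvg_at_right_filter (cvg_id) _ _.
  apply: (@cvgr_le _ _ (nbhs (0:R)) _ (fun t => t) 0 cvg_id 1 ltr01).
near=> t; split; near: t => //.
Unshelve. all: by end_near.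
Qed.

Lemma move_up (f : V -> R) (U : set V) p v : differentiable f p -> open U -> U p ->
  0 < 'd f p v -> exists t : R, [/\ 0 < t, t <= 1, U (t *: v + p) & f p < f (t *: v + p)].
Proof.
move=> df oU Up dpos.
have hq := @cvgr_gt R _ _ _ _ _ (@dirder f p v df) 0 dpos.
have hg := @near_good U p v oU Up.
have Hn : \forall t \near (0:R)^'+, [/\ 0 < t, t <= 1 & U (t *: v + p)] /\
   0 < t^-1 *: (f (t *: v + p) - f p).
  by near=> t; split; near: t; [exact: hg|exact: hq].
have [t [[t0 t1 tU] tq]] := filter_ex Hn.
exists t; split => //.
by move: tq; rewrite /GRing.scale /= pmulr_rgt0 ?invr_gt0 // subr_gt0.
Unshelve. all: by end_near.
Qed.

Lemma move_down (f : V -> R) (U : set V) p v : differentiable f p -> open U -> U p ->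
  'd f p v < 0 -> exists t : R, [/\ 0 < t, t <= 1, U (t *: v + p) & f (t *: v + p) < f p].
Proof.
move=> df oU Up dneg.
have hq := @cvgr_lt R _ _ _ _ _ (@dirder f p v df) 0 dneg.
have hg := @near_good U p v oU Up.
have Hn : \forall t \near (0:R)^'+, [/\ 0 < t, t <= 1 & U (t *: v + p)] /\
   t^-1 *: (f (t *: v + p) - f p) < 0.
  by near=> t; split; near: t; [exact: hg|exact: hq].
have [t [[t0 t1 tU] tq]] := filter_ex Hn.
exists t; split => //.
by move: tq; rewrite /GRing.scale /= pmulr_rlt0 ?invr_gt0 // subr_lt0.
Unshelve. all: by end_near.
Qed.

End S.

Section A.
Variables (R : realType) (n : nat).
Local Notation V := 'rV[R]_(n + n).

Lemma innerC (u v : V) : inner u v = inner v u.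
Proof. by apply: eq_bigr => i _; rewrite mulrC. Qed.

Lemma innerDr (u v w : V) : inner u (v + w) = inner u v + inner u w.
Proof. by rewrite /inner -big_split; apply: eq_bigr => i _; rewrite !mxE mulrDr. Qed.

Lemma innerZr (u v : V) (a : R) : inner u (a *: v) = a * inner u v.
Proof. by rewrite /inner mulr_sumr; apply: eq_bigr => i _; rewrite !mxE mulrCA. Qed.

Lemma innerNr (u v : V) : inner u (- v) = - inner u v.
Proof. by rewrite -scaleN1r innerZr mulN1r. Qed.

Lemma innerBr (u v w : V) : inner u (v - w) = inner u v - inner u w.
Proof. by rewrite innerDr innerNr. Qed.

Lemma innerDl (u v w : V) : inner (v + w) u = inner v u + inner w u.
Proof. by rewrite innerC innerDr !(innerC u). Qed.

Lemma innerZl (u v : V) (a : R) : inner (a *: v) u = a * inner v u.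
Proof. by rewrite innerC innerZr innerC. Qed.

Lemma innerNl (u v : V) : inner (- v) u = - inner v u.
Proof. by rewrite innerC innerNr innerC. Qed.

Lemma inner_ge0 (u : V) : 0 <= inner u u.
Proof. by apply: sumr_ge0 => i _; rewrite -expr2 sqr_ge0. Qed.

Lemma inner_eq0 (u : V) : inner u u = 0 -> u = 0.
Proof.
move=> /eqP; rewrite psumr_eq0; last by move=> i _; rewrite -expr2 sqr_ge0.
move=> /allP H; apply/rowP => i; rewrite mxE.
have := H i (mem_index_enum i); rewrite /= mulf_eq0 orbb => /eqP ->.
by [].
Qed.

Lemma inner_split (u v : V) : inner u v =
  \sum_(i < n) (lsubmx u 0 i * lsubmx v 0 i + rsubmx u 0 i * rsubmx v 0 i).
Proof.
rewrite /inner big_split_ord big_split /=.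
by congr (_ + _); apply: eq_bigr => i _; rewrite !mxE; congr (u _ _ * v _ _);
  apply: val_inj; rewrite /= ?ord1.
Qed.

Lemma JmulL (u : V) : lsubmx (Jmul u) = - rsubmx u.
Proof. by rewrite /Jmul row_mxKl. Qed.
Lemma JmulR (u : V) : rsubmx (Jmul u) = lsubmx u.
Proof. by rewrite /Jmul row_mxKr. Qed.

Lemma JJ (u : V) : Jmul (Jmul u) = - u.
Proof. by rewrite {1}/Jmul JmulL JmulR -{3}(hsubmxK u) opp_row_mx. Qed.

Lemma JmulD (u v : V) : Jmul (u + v) = Jmul u + Jmul v.
Proof. by rewrite /Jmul add_row_mx !linearD /= ?opprD. Qed.

Lemma JmulZ (a : R) (u : V) : Jmul (a *: u) = a *: Jmul u.
Proof. by rewrite /Jmul scale_row_mx !linearZ /= scalerN. Qed.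

Lemma JmulN (u : V) : Jmul (- u) = - Jmul u.
Proof. by rewrite -scaleN1r JmulZ scaleN1r. Qed.

Lemma innerJJ (u v : V) : inner (Jmul u) (Jmul v) = inner u v.
Proof.
rewrite !inner_split; apply: eq_bigr => i _.
rewrite !JmulL !JmulR !mxE; ring.
Qed.

Lemma Jinj (u v : V) : Jmul u = Jmul v -> u = v.
Proof. by move=> /(congr1 (@Jmul R n)); rewrite !JJ => /oppr_inj. Qed.

Lemma omega_self (u : V) : omega u u = 0.
Proof.
rewrite /omega inner_split big1 // => i _.
rewrite !JmulL !JmulR !mxE; ring.
Qed.

Lemma omega_anti (u v : V) : omega u v = - omega v u.
Proof.
rewrite /omega !inner_split -sumrN; apply: eq_bigr => i _.
rewrite !JmulL !JmulR !mxE; ring.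
Qed.

Lemma omegaDl (u v w : V) : omega (u + v) w = omega u w + omega v w.
Proof. by rewrite /omega JmulD innerDl. Qed.
Lemma omegaDr (u v w : V) : omega w (u + v) = omega w u + omega w v.
Proof. by rewrite /omega innerDr. Qed.
Lemma omegaZl (a : R) (u w : V) : omega (a *: u) w = a * omega u w.
Proof. by rewrite /omega JmulZ innerZl. Qed.
Lemma omegaZr (a : R) (u w : V) : omega w (a *: u) = a * omega w u.
Proof. by rewrite /omega innerZr. Qed.
Lemma omegaNl (u w : V) : omega (- u) w = - omega u w.
Proof. by rewrite /omega JmulN innerNl. Qed.
Lemma omegaNr (u w : V) : omega w (- u) = - omega w u.
Proof. by rewrite /omega innerNr. Qed.
Lemma omegaBl (u v w : V) : omega (u - v) w = omega u w - omega v w.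
Proof. by rewrite omegaDl omegaNl. Qed.
Lemma omegaBr (u v w : V) : omega w (u - v) = omega w u - omega w v.
Proof. by rewrite omegaDr omegaNr. Qed.

Lemma inner_mJ (a b : V) : inner (- Jmul b) a = omega a b.
Proof.
by rewrite omega_anti /omega innerNl.
Qed.

Lemma omega_J (a b : V) : omega a (Jmul b) = inner a b.
Proof. by rewrite /omega innerJJ. Qed.

Lemma linalg (u w : V) : w != 0 ->
  (forall v, omega v w = 0 -> omega u v = 0) -> exists c : R, u = c *: w.
Proof.
move=> w0 H.
have Jw0 : inner (Jmul w) (Jmul w) != 0.
  apply/eqP => /inner_eq0 hw; move/eqP: w0; apply.
  by apply/eqP; rewrite -oppr_eq0 -(JJ w) hw -(scale0r (0:V)) JmulZ !scale0r.
set Ju := Jmul u; set Jw := Jmul w.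
set c := inner Ju Jw / inner Jw Jw.
set v := Ju - c *: Jw.
have h1 : omega v w = 0.
  rewrite -inner_mJ innerNl innerBr innerZr /c innerC -mulrA mulVf //.
  by rewrite mulr1 subrr oppr0.
have h2 := H v h1.
have h3 : inner v v = 0.
  rewrite {1}/v innerDl innerNl innerZl.
  have -> : inner Ju v = 0 by rewrite -h2.
  have -> : inner Jw v = 0.
    by move: h1; rewrite -inner_mJ innerNl => /eqP; rewrite oppr_eq0 => /eqP.
  by rewrite mulr0 subrr.
have := inner_eq0 h3; rewrite /v => /eqP; rewrite subr_eq0 => /eqP hJ.
exists c; apply: Jinj; by rewrite JmulZ.
Qed.

End A.

Section G.
Variables (R : realType) (n : nat) (X : set 'rV[R]_(n + n)).
Local Notation V := 'rV[R]_(n + n).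
Hypothesis hconv : convex X.
Hypothesis hcl : closed X.
Hypothesis hint0 : interior X 0.
Hypothesis hsp : X = omega_polar X.
Hypothesis hC1 : C1_boundary X.

Lemma XX a b : X a -> X b -> omega a b <= 1.
Proof. by move=> Xa; rewrite {1}hsp => Pb; exact: Pb. Qed.

Lemma Xneg a : X a -> X (- a).
Proof. move=> Xa; rewrite hsp => x Xx; rewrite omegaNr -omega_anti; exact: XX. Qed.

Lemma bd_X p : boundary X p -> X p.
Proof. by case=> cp _; move: cp; rewrite -(proj1 (closure_id X) hcl). Qed.

Lemma int_scale a : interior X a -> exists t : R, 1 < t /\ X (t *: a).
Proof.
move=> ia.
have hc : (fun t : R => t *: a) @ 1^'+ --> a.
  apply: cvg_at_right_filter; rewrite -{2}[a]scale1r; apply: cvgZl; exact: cvg_id.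
have h1 : \forall t \near (1:R)^'+, X (t *: a) by exact: (hc _ ia).
have h2 := nbhs_right_gt (1:R).
have Hn : \forall t \near (1:R)^'+, 1 < t /\ X (t *: a) by near=> t; split; near: t.
exact: filter_ex Hn.
Unshelve. all: by end_near.
Qed.

Lemma int0_scale g : exists t : R, 0 < t /\ X (t *: g).
Proof.
have hc : (fun t : R => t *: g) @ 0^'+ --> (0 : V).
  apply: cvg_at_right_filter; rewrite -(scale0r g); apply: cvgZl; exact: cvg_id.
have h1 : \forall t \near (0:R)^'+, X (t *: g) by exact: (hc _ hint0).
have h2 := nbhs_right_gt (0:R).
have Hn : \forall t \near (0:R)^'+, 0 < t /\ X (t *: g) by near=> t; split; near: t.
exact: filter_ex Hn.
Unshelve. all: by end_near.
Qed.

Lemma bdry2 a b : X a -> X b -> omega a b = 1 -> boundary X b.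
Proof.
move=> Xa Xb ab; split; first exact: subset_closure.
move=> /int_scale [t [t1 Xtb]].
by have := XX Xa Xtb; rewrite omegaZr ab mulr1 leNgt t1.
Qed.

Lemma bdry1 a b : X a -> X b -> omega a b = 1 -> boundary X a.
Proof. move=> Xa Xb ab; apply: (bdry2 (Xneg Xb) Xa); by rewrite omegaNl -omega_anti. Qed.

Lemma dfn0 p U rho g : boundary X p -> local_defining_fun X p U rho g -> rho p = 0.
Proof.
move=> bp dfn; case: (dfn) => [[oU Up] hd _ _ e].
have Xp := bd_X bp.
have : rho p <= 0.
  have : (X `&` U) p by split.
  by rewrite e => -[].
rewrite le_eqVlt => /orP [/eqP //|neg].
exfalso; case: bp => _; apply.
have cont : {for p, continuous rho} := differentiable_continuous (proj1 (hd p Up)).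
have h1 : \forall y \near p, rho y < 0 := @cvgr_lt R _ _ _ rho (rho p) cont 0 neg.
have h2 : \forall y \near p, U y by apply: open_nbhs_nbhs; split.
rewrite /interior /=.
near=> y.
have : (X `&` U) y by rewrite e; split; [near: y; exact: h2 | apply: ltW; near: y; exact: h1].
by case.
Unshelve. all: by end_near.
Qed.

Lemma inner_pos (u : V) : u != 0 -> 0 < inner u u.
Proof.
move=> u0; rewrite lt_def inner_ge0 andbT; apply: contra u0 => /eqP/inner_eq0 ->.
by [].
Qed.

Lemma dfn_supp p U rho g : boundary X p -> local_defining_fun X p U rho g ->
  forall y, X y -> inner (g p) (y - p) <= 0.
Proof.
move=> bp dfn y Xy; rewrite leNgt; apply/negP => pos.
have r0 := dfn0 bp dfn.
case: dfn => [[oU Up] hd _ _ e].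
have [dp dd] := hd p Up.
have : 0 < 'd rho p (y - p) by rewrite dd.
move=> /(move_up dp oU Up) [t [t0 t1 tU tr]].
have Xt : X (t *: (y - p) + p).
  have -> : t *: (y - p) + p = t *: y + (1 - t) *: p.
    by rewrite scalerBr scalerBl scale1r addrA addrAC.
  exact: hconv Xy (bd_X bp) (ltW t0) t1.
have : (X `&` U) (t *: (y - p) + p) by split.
rewrite e => -[_]; rewrite r0 in tr.
by rewrite leNgt tr.
Qed.

Lemma dfn_par p U rho g h : boundary X p -> local_defining_fun X p U rho g ->
  (forall y, X y -> inner h y <= inner h p) -> exists c : R, h = c *: g p.
Proof.
move=> bp dfn hs.
have r0 := dfn0 bp dfn.
case: (dfn) => [[oU Up] hd _ hg0 e].
have [dp dd] := hd p Up.
set G := g p.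
have K : forall v, inner G v < 0 -> inner h v <= 0.
  move=> v neg; rewrite leNgt; apply/negP => hv.
  have : 'd rho p v < 0 by rewrite dd.
  move=> /(move_down dp oU Up) [t [t0 t1 tU tr]].
  have : (X `&` U) (t *: v + p) by rewrite e; split => //; rewrite -r0 ltW.
  case=> Xt _.
  have := hs _ Xt; rewrite innerDr innerZr.
  have : 0 < t * inner h v by rewrite mulr_gt0.
  lra.
have G0 : 0 < inner G G by apply: inner_pos; exact: hg0.
set c := inner h G / inner G G.
set w := h - c *: G.
have Gw : inner G w = 0.
  by rewrite innerBr innerZr /c -mulrA mulVf ?gt_eqF// mulr1 innerC subrr.
have ww : inner w w = inner h w.
  by rewrite {1}/w innerDl innerNl innerZl Gw mulr0 subr0.
have hG : forall s, 0 < s -> inner w w <= s * inner h G.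
  move=> s s0; have := K (w - s *: G); rewrite innerBr innerZr Gw.
  have neg : 0 - s * inner G G < 0 by rewrite sub0r oppr_lt0 mulr_gt0.
  move/(_ neg); rewrite innerBr innerZr -ww; lra.
have w0 : w = 0.
  apply: inner_eq0; apply/eqP; rewrite eq_le inner_ge0 andbT.
  rewrite leNgt; apply/negP => wpos.
  case: (lerP (inner h G) 0) => hGs.
    by have := hG 1 ltr01; lra.
  have sp : 0 < inner w w / (2 * inner h G) by rewrite divr_gt0 // mulr_gt0.
  have := hG _ sp.
  have -> : inner w w / (2 * inner h G) * inner h G = inner w w / 2.
    by field; rewrite gt_eqF.
  lra.
exists c; move: w0; rewrite /w => /eqP; rewrite subr_eq0 => /eqP.
by [].
Qed.

Lemma f_ex p : boundary X p -> exists y, omega_polar X y /\ omega p y = 1.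
Proof.
move=> bp; have [U [rho [g dfn]]] := hC1 bp.
have sup := dfn_supp bp dfn.
case: (dfn) => [[oU Up] _ _ hg0 _].
set G := g p.
have G0 : 0 < inner G G by apply: inner_pos; exact: hg0.
have [t [t0 Xt]] := int0_scale G.
have c0 : 0 < inner G p.
  have := sup _ Xt; rewrite innerBr innerZr => h.
  have : 0 < t * inner G G by rewrite mulr_gt0.
  lra.
exists ((inner G p)^-1 *: Jmul G); split.
  move=> x Xx; rewrite omegaZr omega_J (innerC x).
  have := sup _ Xx; rewrite innerBr subr_le0 => le.
  by rewrite mulrC ler_pdivrMr // mul1r.
by rewrite omegaZr omega_J (innerC p) mulVf // gt_eqF.
Qed.

Lemma f_uniq p y1 y2 : boundary X p -> X y1 -> X y2 ->
  omega p y1 = 1 -> omega p y2 = 1 -> y1 = y2.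
Proof.
move=> bp X1 X2 e1 e2; have [U [rho [g dfn]]] := hC1 bp.
have supp y0 : X y0 -> omega p y0 = 1 -> exists c, - Jmul y0 = c *: g p.
  move=> X0 e0; apply: (dfn_par bp dfn) => y Xy; rewrite !inner_mJ e0; exact: XX.
have [c1 h1] := supp _ X1 e1; have [c2 h2] := supp _ X2 e2.
have k1 : c1 * inner (g p) p = 1 by rewrite -innerZl -h1 inner_mJ.
have k2 : c2 * inner (g p) p = 1 by rewrite -innerZl -h2 inner_mJ.
have nz : inner (g p) p != 0.
  by apply/eqP => z; move: k1; rewrite z mulr0 => /eqP; rewrite eq_sym oner_eq0.
have ec : c1 = c2 by apply: (mulIf nz); rewrite k1 k2.
by apply: Jinj; apply: oppr_inj; rewrite h1 h2 ec.
Qed.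

Lemma f_spec p : boundary X p -> X (fpol X p) /\ omega p (fpol X p) = 1.
Proof.
move=> bp; have [h1 h2] := xgetPex 0 (f_ex bp).
split => //.
have : omega_polar X (fpol X p) := h1.
by rewrite -hsp.
Qed.

Lemma f_char p y : boundary X p -> X y -> omega p y = 1 -> fpol X p = y.
Proof. by move=> bp Xy e; have [Xf ef] := f_spec bp; exact: (f_uniq bp Xf Xy ef e). Qed.

Lemma tan_char p v : boundary X p -> (tangent_space X p v <-> omega v (fpol X p) = 0).
Proof.
move=> bp; have [Xf ef] := f_spec bp.
have supp : forall y, X y -> inner (- Jmul (fpol X p)) y <= inner (- Jmul (fpol X p)) p.
  by move=> y Xy; rewrite !inner_mJ ef; exact: XX.
split.
  case=> U [rho [g [dfn gv]]].
  have [c hc] := dfn_par bp dfn supp.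
  by rewrite -inner_mJ hc innerZl gv mulr0.
move=> hv; have [U [rho [g dfn]]] := hC1 bp.
exists U, rho, g; split => //.
have [c hc] := dfn_par bp dfn supp.
have k1 : c * inner (g p) p = 1 by rewrite -innerZl -hc inner_mJ.
have : c * inner (g p) v = 0 by rewrite -innerZl -hc inner_mJ.
move/eqP; rewrite mulf_eq0 => /orP [/eqP c0|/eqP //].
by move: k1; rewrite c0 mul0r => /eqP; rewrite eq_sym oner_eq0.
Qed.

Lemma omega0r (u : V) : omega u 0 = 0.
Proof. by rewrite -(scale0r (0:V)) omegaZr mul0r. Qed.
Lemma omega0l (u : V) : omega 0 u = 0.
Proof. by rewrite -(scale0r (0:V)) omegaZl mul0r. Qed.

Lemma char_par p u : boundary X p -> char_dir X p u -> exists mu : R, u = mu *: fpol X p.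
Proof.
move=> bp [_ H]; apply: linalg.
  apply/eqP => f0; have [_ ef] := f_spec bp; move: ef; rewrite f0 omega0r.
  by move=> /eqP; rewrite eq_sym oner_eq0.
move=> v hv; apply: H; exact/(tan_char _ bp).
Qed.

Lemma char_mk p u : boundary X p -> omega u (fpol X p) = 0 ->
  (forall v, omega v (fpol X p) = 0 -> omega u v = 0) -> char_dir X p u.
Proof.
move=> bp h1 h2; split; first exact/(tan_char _ bp).
by move=> v /(tan_char _ bp); exact: h2.
Qed.

Lemma ffneg x : boundary X x -> fpol X (fpol X x) = - x.
Proof.
move=> bx; have [Xf ef] := f_spec bx.
have bf : boundary X (fpol X x) := bdry2 (bd_X bx) Xf ef.
apply: (f_char bf (Xneg (bd_X bx))).
by rewrite omegaNr -omega_anti.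
Qed.

Lemma billiard x : boundary X x -> outer_billiard X (x + fpol X x) = fpol X x - x.
Proof.
move=> bx; have Xx := bd_X bx; have [Xf ef] := f_spec bx.
have bf := bdry2 Xx Xf ef.
have ff := ffneg bx.
move: Xf ef bf ff; set q := fpol X x => Xf ef bf ff.
set z := x + q.
have x0 : x != 0.
  by apply/eqP => x0; move: ef; rewrite x0 omega0l => /eqP; rewrite eq_sym oner_eq0.
have bpq : billiard_point X z q.
  split => //.
  - apply/eqP => /(congr1 (fun w => w - q)); rewrite /z addrK subrr.
    by apply/eqP.
  - have -> : z - q = x by rewrite /z addrK.
    apply: char_mk => //; rewrite ff.
      by rewrite omegaNr omega_self oppr0.
    move=> v; rewrite omegaNr [omega x v]omega_anti => /eqP.
    by rewrite oppr_eq0 => /eqP ->; rewrite oppr0.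
  - have -> : q - z = - x by rewrite /z opprD addrCA subrr addr0.
    by rewrite omegaNr -omega_anti ef ltr01.
have uniq : forall p, billiard_point X z p -> p = q.
  move=> p [bp zp cp pz].
  have [mu hmu] := char_par bp cp.
  have [Xfp efp] := f_spec bp.
  move: Xfp efp hmu; set r := fpol X p => Xfp efp hmu.
  have mu0 : mu < 0.
    move: pz; have -> : p - z = - (mu *: r) by rewrite -hmu opprB.
    by rewrite omegaNr omegaZr efp mulr1 oppr_gt0.
  have hp : p = x + q - mu *: r by rewrite -hmu opprB addrC subrK.
  have e1 : omega p (- x) <= 1 := XX (bd_X bp) (Xneg Xx).
  have e2 : omega q r <= 1 := XX Xf Xfp.
  have hq : q = p - x + mu *: r by rewrite -hmu /z addrC !addrA subrK addrAC subrr add0r.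
  have oqx : omega q (- x) = 1 by rewrite omegaNr -omega_anti.
  have E1 : omega p (- x) = 1 - mu * omega r (- x).
    rewrite hp omegaBl omegaDl omegaZl oqx omegaNr omega_self oppr0 add0r.
    by [].
  have E2 : omega q r = 1 - omega r (- x).
    rewrite hq omegaDl omegaBl omegaZl omega_self mulr0 addr0 efp.
    by rewrite omegaNr [omega x r]omega_anti.
  have a0 : omega r (- x) = 0.
    rewrite E1 in e1; rewrite E2 in e2; nra.
  have eq1 : omega q r = 1 by rewrite E2 a0 subr0.
  have Xmr := Xneg Xfp.
  have o1 : omega (- r) q = 1 by rewrite omegaNl -omega_anti.
  have o2 : omega (- r) p = 1 by rewrite omegaNl -omega_anti.
  have bmr := bdry1 Xmr Xf o1.
  by apply: esym; apply: (f_uniq bmr Xf (bd_X bp) o1 o2).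
rewrite /outer_billiard /=.
rewrite (xget_unique 0 bpq uniq).
by rewrite /z mulr2n scalerDl scale1r opprD addrACA subrr addr0.
Qed.

Lemma main_sec : let Y := [set x + fpol X x | x in boundary X] in
  [/\ Y `<=` ~` X, outer_billiard X @` Y = Y &
      forall x, boundary X x ->
        outer_billiard X (x + fpol X x) = fpol X x + fpol X (fpol X x)].
Proof.
move=> Y.
have P3 : forall x, boundary X x ->
    outer_billiard X (x + fpol X x) = fpol X x + fpol X (fpol X x).
  by move=> x bx; rewrite billiard // ffneg.
split => //.
  move=> _ [x bx <-] Xz.
  have [Xf ef] := f_spec bx.
  have h : fpol X x = x + fpol X x.
    by apply: (f_char bx Xz); rewrite omegaDr omega_self add0r.
  move/(congr1 (fun w => w - fpol X x)): h; rewrite subrr addrK => x0.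
  by move: ef; rewrite -x0 omega0l => /eqP; rewrite eq_sym oner_eq0.
apply/seteqP; split.
  move=> _ [_ [x bx <-] <-]; rewrite P3 //.
  have [Xf ef] := f_spec bx.
  by exists (fpol X x) => //; exact: (bdry2 (bd_X bx) Xf ef).
move=> _ [x bx <-].
have [Xf ef] := f_spec bx.
have o : omega (- fpol X x) x = 1 by rewrite omegaNl -omega_anti.
have bm := bdry1 (Xneg Xf) (bd_X bx) o.
have fm : fpol X (- fpol X x) = x := f_char bm (bd_X bx) o.
exists (- fpol X x + fpol X (- fpol X x)); first by exists (- fpol X x).
by rewrite P3 // fm.
Qed.

End G.


Theorem mainTheorem6 (R : realType) (n : nat) (X : set 'rV[R]_(n + n)) :
  convex_body_0 X -> symp_self_polar X -> C1_boundary X ->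
  let Y := [set x + fpol X x | x in boundary X] in
  [/\ Y `<=` ~` X,
      outer_billiard X @` Y = Y &
      forall x, boundary X x ->
        outer_billiard X (x + fpol X x) = fpol X x + fpol X (fpol X x)].
Proof.
move=> [hconv [hcomp hint]] hsp hC1.
have hcl : closed X := compact_closed (@norm_hausdorff _ _) hcomp.
exact: (main_sec hconv hcl hint hsp hC1).
Qed.
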